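(* Let $f:\mathbb{R}^d\times\mathcal{Z}\to\mathbb{R}$ be such that for every $z$, $f(\cdot,z)$ is non-negative, convex and $\beta$-smooth, let $S=(z_1,\dots,z_n)$, and suppose there is $w^\star\in\mathbb{R}^d$ that is a $\rho$-flat minimum of $f(\cdot,z_i)$ for every $i$ (so $F_S(w^\star+v)=0$ for all $\|v\|\le\rho$). Let $0<\eta\le \frac{1}{4\beta}$, $r>0$, $w_1\in\mathbb{R}^d$, and let $\{w_t\}_{t=1}^{T}$ satisfy $w_{t+1}=w_t-\eta\nabla F_S(w_t+v_t)$ where $\{v_t\}_{t=1}^T$ are arbitrary vectors with $\|v_t\|\le r$. Then $$\frac1T\sum_{t=1}^T F_S(w_t+v_t)-F_S(w^\star)\le \frac{\|w_1-w^\star\|^2}{\eta T}+4\beta\max\{r-\rho,0\}^2.$$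
   Context: Norms are Euclidean. $F_S(w)=\frac1n\sum_{i=1}^n f(w,z_i)$. A function is $\beta$-smooth if its gradient is $\beta$-Lipschitz. For $\rho\ge0$, a point $w^\star$ is a $\rho$-flat minimum of a non-negative function $g$ if $g(w)=0$ for every $w$ with $\|w-w^\star\|\le\rho$. *)

(* Defs.v *)
From HB Require Import structures.
From mathcomp Require Import all_boot all_order all_algebra.
From mathcomp Require Import all_classical all_reals all_analysis.
Set Implicit Arguments. Unset Strict Implicit. Unset Printing Implicit Defensive.
Import Order.TTheory GRing.Theory Num.Theory.
Import numFieldNormedType.Exports.
Local Open Scope ring_scope.

Definition dotv {R : realType} {d : nat} (u v : 'rV[R]_d) : R :=
  \sum_(i < d) u 0 i * v 0 i.
Definition enorm {R : realType} {d : nat} (v : 'rV[R]_d) : R :=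
  Num.sqrt (dotv v v).

Definition grad {R : realType} {d : nat} (F : 'rV[R]_d -> R) (w : 'rV[R]_d)
  : 'rV[R]_d := \row_(i < d) ('d F w : 'rV[R]_d -> R) (delta_mx 0 i).

Definition convex_fun {R : realType} {d : nat} (g : 'rV[R]_d -> R) : Prop :=
  forall (x y : 'rV[R]_d) (t : R), 0 <= t -> t <= 1 ->
    g (t *: x + (1 - t) *: y) <= t * g x + (1 - t) * g y.

Definition smooth_fun {R : realType} {d : nat} (beta : R) (g : 'rV[R]_d -> R)
  : Prop :=
  (forall w, differentiable g w) /\
  (forall x y, enorm (grad g x - grad g y) <= beta * enorm (x - y)).

Definition flat_min {R : realType} {d : nat} (rho : R) (g : 'rV[R]_d -> R)
  (wstar : 'rV[R]_d) : Prop :=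
  forall w, enorm (w - wstar) <= rho -> g w = 0.

Definition FS {R : realType} {d : nat} {Z : Type} (f : 'rV[R]_d -> Z -> R)
  (n : nat) (z : 'I_n -> Z) (w : 'rV[R]_d) : R :=
  (n%:R)^-1 * \sum_(i < n) f w (z i).

(* Main.v *)
Require Import Defs.
From HB Require Import structures.
From mathcomp Require Import all_boot all_order all_algebra.
From mathcomp Require Import all_classical all_reals all_analysis.
From mathcomp Require Import ring lra.
Import Order.TTheory GRing.Theory Num.Theory.
Import numFieldNormedType.Exports.
Local Open Scope ring_scope.

Section Dot.
Variables (R : realType) (d : nat).
Implicit Types u v x : 'rV[R]_d.

Lemma dotvC u v : dotv u v = dotv v u.
Proof. by apply: eq_bigr => i _; rewrite mulrC. Qed.
Lemma dotvDl u v x : dotv (u + v) x = dotv u x + dotv v x.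
Proof. by rewrite /dotv -big_split; apply: eq_bigr => i _; rewrite mxE mulrDl. Qed.
Lemma dotvZl (a : R) u x : dotv (a *: u) x = a * dotv u x.
Proof. by rewrite /dotv mulr_sumr; apply: eq_bigr => i _; rewrite mxE mulrA. Qed.
Lemma dotvNl u x : dotv (- u) x = - dotv u x.
Proof. by rewrite -scaleN1r dotvZl mulN1r. Qed.
Lemma dotvBl u v x : dotv (u - v) x = dotv u x - dotv v x.
Proof. by rewrite dotvDl dotvNl. Qed.
Lemma dotvDr u v x : dotv x (u + v) = dotv x u + dotv x v.
Proof. by rewrite dotvC dotvDl !(dotvC x). Qed.
Lemma dotvZr (a : R) u x : dotv x (a *: u) = a * dotv x u.
Proof. by rewrite dotvC dotvZl dotvC. Qed.
Lemma dotvBr u v x : dotv x (u - v) = dotv x u - dotv x v.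
Proof. by rewrite dotvC dotvBl !(dotvC x). Qed.
Lemma dotvv_ge0 u : 0 <= dotv u u.
Proof. by apply: sumr_ge0 => i _; rewrite -expr2 sqr_ge0. Qed.
Lemma dotvv_eq0 v u : dotv u u = 0 -> dotv v u = 0.
Proof.
move=> /eqP; rewrite psumr_eq0; last by move=> i _; rewrite -expr2 sqr_ge0.
move=> /allP H; apply: big1 => i _.
have /H : i \in index_enum 'I_d by rewrite mem_index_enum.
by rewrite /= mulf_eq0 orbb => /eqP ->; rewrite mulr0.
Qed.
Lemma enorm_ge0 u : 0 <= enorm u.
Proof. exact: sqrtr_ge0. Qed.
Lemma enorm_sq u : enorm u ^+ 2 = dotv u u.
Proof. by rewrite sqr_sqrtr // dotvv_ge0. Qed.

Lemma CS u v : dotv u v <= enorm u * enorm v.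
Proof.
have H : dotv u v ^+ 2 <= dotv u u * dotv v v.
  have [B0|Bp] := eqVneq (dotv v v) 0.
    by rewrite (dotvv_eq0 _ _ B0) B0 expr0n mulr0.
  have Bpos : 0 < dotv v v by rewrite lt_def Bp dotvv_ge0.
  set A := dotv u u; set B := dotv v v; set C := dotv u v.
  have := dotvv_ge0 (B *: u - C *: v).
  rewrite !dotvBl !dotvBr !dotvZl !dotvZr -/A -/B (dotvC v u) -/C => h.
  have : 0 <= B * (A * B - C ^+ 2) by rewrite expr2; lra.
  by rewrite pmulr_rge0 // subr_ge0.
rewrite /enorm -sqrtrM ?dotvv_ge0 //.
apply: (le_trans (ler_norm _)).
by rewrite -sqrtr_sqr ler_sqrt // mulr_ge0 // dotvv_ge0.
Qed.
End Dot.
Arguments dotvC {R d}. Arguments dotvv_eq0 {R d}. Arguments CS {R d}.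
Arguments enorm_sq {R d}. Arguments enorm_ge0 {R d}. Arguments dotvv_ge0 {R d}.
Section Dot2.
Variables (R : realType) (d : nat).
Implicit Types u v x : 'rV[R]_d.
Lemma enormZ (a : R) u : enorm (a *: u) = `|a| * enorm u.
Proof.
by rewrite /enorm dotvZl dotvZr mulrA -expr2 sqrtrM ?sqr_ge0 // sqrtr_sqr.
Qed.
Lemma enormD u v : enorm (u + v) <= enorm u + enorm v.
Proof.
have -> : enorm u + enorm v = Num.sqrt ((enorm u + enorm v)^+2).
  by rewrite sqrtr_sqr ger0_norm // addr_ge0 // enorm_ge0.
rewrite [X in X <= _]/enorm ler_sqrt ?sqr_ge0 //.
rewrite !dotvDl !dotvDr (dotvC v u) sqrrD !enorm_sq.
have := CS u v; lra.
Qed.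
Lemma enormB_sq u v : dotv (u - v) (u - v) = dotv u u - 2 * dotv u v + dotv v v.
Proof. rewrite !dotvBl !dotvBr (dotvC v u); ring. Qed.
End Dot2.
Arguments enormZ {R d}. Arguments enormD {R d}. Arguments enormB_sq {R d}.


Section An.
Variables (R : realType) (d : nat).
Implicit Types u v x : 'rV[R]_d.

Lemma gradE (G : 'rV[R]_d -> R) x h : differentiable G x ->
  'D_h G x = dotv (grad G x) h.
Proof.
move=> dG; rewrite deriveE // {1}(row_sum_delta h) linear_sum /dotv.
by apply: eq_bigr => i _; rewrite linearZ /= mxE mulrC.
Qed.

Lemma phi_derive (G : 'rV[R]_d -> R) x h (t : R) : (forall y, differentiable G y) ->
  is_derive t (1:R) (fun s : R => G (x + s *: h)) (dotv (grad G (x + t *: h)) h).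
Proof.
move=> dG.
have E : (fun s : R => s^-1 *: (((fun s : R => G (x + s *: h)) \o shift t) (s *: 1) - G (x + t *: h)))
   = (fun s : R => s^-1 *: ((G \o shift (x + t *: h)) (s *: h) - G (x + t *: h))).
  apply/funext => s /=; congr (_ *: (G _ - _)).
  by rewrite scalerDl [s *: 1]mulr1 addrCA addrA.
apply: DeriveDef.
  by rewrite /derivable E; apply: diff_derivable.
by rewrite /derive E -gradE //.
Qed.

Lemma grad_ineq (G : 'rV[R]_d -> R) u p : convex_fun G -> differentiable G u ->
  G u + dotv (grad G u) (p - u) <= G p.
Proof.
move=> cG dG; rewrite -gradE // addrC -lerBrDr.
rewrite /derive; apply: limr_le; first exact: diff_derivable.
have h1 : \forall s \near (dnbhs (0:R)), s < 1 by apply: nbhs_dnbhs; apply: lt_nbhsl.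
have h2 : \forall s \near (dnbhs (0:R)), s != 0 by apply: nbhs_dnbhs_neq.
near=> s; have s1 : s < 1 by near: s.
have s0 : s != 0 by near: s.
rewrite /= /GRing.scale /=.
have [sp|sn] := ltP 0 s.
  have := cG p u s (ltW sp) (ltW s1).
  have -> : s *: p + (1 - s) *: u = s *: (p - u) + u.
    by apply/rowP => i; rewrite !mxE; ring.
  move=> H; rewrite ler_pdivrMl //; lra.
have sn' : s < 0 by rewrite lt_neqAle s0 sn.
set q := s *: (p - u) + u.
have l0 : 0 <= (1 - s)^-1 by rewrite invr_ge0; lra.
have l1 : (1 - s)^-1 <= 1 by rewrite invf_le1; lra.
have := cG q p _ l0 l1.
have -> : (1 - s)^-1 *: q + (1 - (1 - s)^-1) *: p = u.
  have ne : 1 - s != 0 by apply/negP=> /eqP; lra.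
  apply/rowP => i; rewrite /q !mxE; field; by apply/negP=> /eqP; lra.
move=> H.
have H2 : (1 - s) * G u <= G q - s * G p.
  have : (1 - s) * G u <= (1 - s) * ((1 - s)^-1 * G q + (1 - (1 - s)^-1) * G p).
    by rewrite ler_pM2l //; lra.
  have -> : (1 - s) * ((1 - s)^-1 * G q + (1 - (1 - s)^-1) * G p) = G q - s * G p.
    by field; apply/negP=> /eqP; lra.
  done.
rewrite ler_ndivrMl //; lra.
Unshelve. all: by end_near.
Qed.
End An.
Arguments gradE {R d}. Arguments phi_derive {R d}. Arguments grad_ineq {R d}.
Section L2.
Variables (R : realType) (d : nat).
Lemma grad_sq_le (G : 'rV[R]_d -> R) (beta : R) x : 0 < beta ->
  (forall y, 0 <= G y) -> smooth_fun beta G ->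
  dotv (grad G x) (grad G x) <= 2 * beta * G x.
Proof.
move=> bp G0 [dG Lip].
set g := grad G x; set h := (- beta^-1) *: g.
set a := dotv g h; set b := beta * dotv h h / 2.
pose psi := (fun s : R => G (x + s *: h)) - a \*: (id : R -> R) - b \*: ((id : R -> R) ^+ 2).
have D : forall s : R, is_derive s (1:R) psi
   (dotv (grad G (x + s *: h)) h - a *: 1 - b *: ((2%:R * s ^+ 1) *: 1)).
  move=> s.
  have Hid : is_derive s (1:R) (id : R -> R) 1 := is_derive_id s (1:R).
  have K := (is_deriveB (is_deriveB (phi_derive G x h s dG) (is_deriveZ a Hid))
             (is_deriveZ b (is_deriveX 2 Hid))).
  set T := (X in is_derive _ _ X _) in K. have : T = psi by []. 
  by move=> <-.
have cpsi : ({within `[(0:R), 1], continuous psi})%classic.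
  apply: continuous_subspaceT => s.
  apply: differentiable_continuous; apply/derivable1_diffP.
  by case: (D s).
have [c cin E] := MVT ltr01 (fun s _ => D s) cpsi.
move: E; rewrite /psi /= !fctE /= !scale1r !scale0r addr0 => E.
have sc : forall k y : R, k *: y = k * y by [].
move: E; rewrite !sc => E.
have c0 : 0 < c by move: cin; rewrite in_itv /= => /andP[].
have Hc : dotv (grad G (x + c *: h)) h - a - b * (2 * c ^+ 1 * 1) <= 0.
  rewrite /a -dotvBl.
  have C1 := CS (grad G (x + c *: h) - g) h.
  have E1 : x + c *: h - x = c *: h by rewrite addrAC subrr add0r.
  have := Lip (x + c *: h) x; rewrite E1 enormZ gtr0_norm // => L.
  have C2 : enorm (grad G (x + c *: h) - g) * enorm h <= beta * (c * enorm h) * enorm h.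
    by apply: ler_wpM2r; [exact: enorm_ge0|exact: L].
  have hh : enorm h ^+ 2 = dotv h h by rewrite enorm_sq.
  have -> : b * (2 * c ^+ 1 * 1) = beta * (c * enorm h) * enorm h.
    by rewrite /b -hh expr1 mulr1 expr2; field.
  lra.
have ea : a = - beta^-1 * dotv g g by rewrite /a /h dotvZr.
have eb : b = beta^-1 * dotv g g / 2.
  rewrite /b /h dotvZl dotvZr; field; by rewrite gt_eqF.
have Gh := G0 (x + h).
have ib : beta * beta^-1 = 1 by rewrite mulfV // gt_eqF.
have ibp : 0 < beta^-1 by rewrite invr_gt0.
move: E; rewrite !mulr1 subr0 mulr1 mulr0 expr1n expr0n => E.
have F1 : G (x + h) - a - b - G x <= 0.
  move: E Hc; rewrite mulr0 !subr0 mulr1 expr1 => E Hc; lra.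
have H : beta^-1 * dotv g g / 2 <= G x by move: F1; rewrite ea eb; lra.
have := ler_wpM2l (ltW bp) H.
rewrite !mulrA ib mul1r; lra.
Qed.
End L2.


Section Step.
Variables (R : realType) (d : nat).
Lemma step (G : 'rV[R]_d -> R) (beta rho r eta : R) (wstar y vv : 'rV[R]_d) :
  0 < beta -> (forall x, 0 <= G x) -> convex_fun G -> smooth_fun beta G ->
  0 <= rho -> (forall p, enorm (p - wstar) <= rho -> G p = 0) ->
  0 < eta -> eta <= (4 * beta)^-1 -> enorm vv <= r ->
  G (y + vv) <= (dotv (y - wstar) (y - wstar)
      - dotv (y - eta *: grad G (y + vv) - wstar) (y - eta *: grad G (y + vv) - wstar)) / eta
    + 4 * beta * (Num.max (r - rho) 0) ^+ 2.
Proof.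
move=> bp G0 cG sG rho0 flat ep el vr; set g := grad G (y + vv).
set del := Num.max (r - rho) 0.
have del0 : 0 <= del by rewrite le_max lexx orbT.
have [c [c1 c2]] : exists c : R, G (wstar + c *: vv) = 0 /\ enorm (vv - c *: vv) <= del.
  have nv0 := enorm_ge0 vv.
  have [vle|vgt] := leP (enorm vv) rho.
    exists 1; rewrite scale1r subrr; split.
      by apply: flat; rewrite addrC addKr.
    by rewrite /enorm /dotv big1 ?sqrtr0 // => i _; rewrite mxE mul0r.
  have vpos : 0 < enorm vv by apply: le_lt_trans vgt.
  exists (rho / enorm vv); split.
    apply: flat; rewrite addrC addKr enormZ ger0_norm ?divr_ge0 //.
    by rewrite divfK // gt_eqF.
  have -> : vv - (rho / enorm vv) *: vv = (1 - rho / enorm vv) *: vv.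
    by rewrite scalerBl scale1r.
  rewrite enormZ ger0_norm; last first.
    by rewrite subr_ge0 ler_pdivrMr // mul1r ltW.
  rewrite mulrBl mul1r divfK ?gt_eqF //.
  by rewrite le_max; apply/orP; left; lra.
set u := y + vv.
have dG : differentiable G u by case: sG.
have L1 := grad_ineq G u (wstar + c *: vv) cG dG.
rewrite c1 -/g in L1.
set X := dotv g (y - wstar).
have A : G u <= X + enorm g * del.
  have E : wstar + c *: vv - u = - ((y - wstar) + (vv - c *: vv)).
    by rewrite /u; apply/rowP => i; rewrite !mxE; ring.
  rewrite E in L1.
  have C1 := CS g (vv - c *: vv).
  have C2 : enorm g * enorm (vv - c *: vv) <= enorm g * del.
    by apply: ler_wpM2l => //; exact: enorm_ge0.
  move: L1; rewrite dotvC dotvNl dotvDl (dotvC _ g) (dotvC _ g) -/X; lra.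
have Cg : dotv g g <= 2 * beta * G u by apply: grad_sq_le.
set gg := dotv g g in Cg *.
have ng2 : enorm g ^+ 2 = gg by rewrite enorm_sq.
set ng := enorm g in ng2 A *.
have B : 8 * beta * (ng * del) <= gg + 16 * beta ^+ 2 * del ^+ 2.
  have := sqr_ge0 (ng - 4 * beta * del).
  have -> : (ng - 4 * beta * del) ^+ 2 = gg + 16 * beta ^+ 2 * del ^+ 2 - 8 * beta * (ng * del).
    by rewrite -ng2; ring.
  lra.
have B2 : ng * del <= G u / 4 + 2 * beta * del ^+ 2.
  have : beta * (8 * (ng * del)) <= beta * (8 * (G u / 4 + 2 * beta * del ^+ 2)).
    have -> : beta * (8 * (G u / 4 + 2 * beta * del ^+ 2)) = 2 * beta * G u + 16 * beta ^+ 2 * del ^+ 2.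
      by field.
    have -> : beta * (8 * (ng * del)) = 8 * beta * (ng * del) by ring.
    lra.
  by rewrite ler_pM2l // => H; lra.
have E2 : eta * gg <= G u / 2.
  have H1 : eta * gg <= eta * (2 * beta * G u) by rewrite ler_pM2l.
  have H2 : eta * beta <= 1 / 4.
    have H := ler_wpM2r (ltW bp) el.
    have E : (4 * beta)^-1 * beta = 1 / 4 by field; rewrite gt_eqF.
    by rewrite E in H.
  have H3 : (eta * beta) * G u <= 1 / 4 * G u by rewrite ler_wpM2r.
  rewrite (_ : eta * (2 * beta * G u) = 2 * ((eta * beta) * G u)) in H1; last by ring.
  lra.
have -> : dotv (y - wstar) (y - wstar) - dotv (y - eta *: g - wstar) (y - eta *: g - wstar)
    = 2 * eta * X - eta ^+ 2 * gg.
  have -> : y - eta *: g - wstar = (y - wstar) - eta *: g by rewrite addrAC.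
  rewrite (enormB_sq (y - wstar) (eta *: g)) !dotvZr !dotvZl (dotvC _ g) -/X -/gg; ring.
have -> : (2 * eta * X - eta ^+ 2 * gg) / eta = 2 * X - eta * gg.
  by field; rewrite gt_eqF.
lra.
Qed.
End Step.


Lemma main_abstract (R : realType) (d : nat) (G : 'rV[R]_d -> R) (beta rho r eta : R)
  (wstar : 'rV[R]_d) (T : nat) (w v : nat -> 'rV[R]_d) :
  0 < beta -> (forall x, 0 <= G x) -> convex_fun G -> smooth_fun beta G ->
  0 <= rho -> (forall p, enorm (p - wstar) <= rho -> G p = 0) ->
  0 < eta -> eta <= (4 * beta)^-1 -> (0 < T)%N ->
  (forall t, (1 <= t <= T)%N -> enorm (v t) <= r) ->
  (forall t, (1 <= t < T)%N ->
     w t.+1 = w t - eta *: grad G (w t + v t)) ->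
  (T%:R)^-1 * (\sum_(1 <= t < T.+1) G (w t + v t)) - G wstar
    <= enorm (w 1%N - wstar) ^+ 2 / (eta * T%:R)
       + 4 * beta * (Num.max (r - rho) 0) ^+ 2.
Proof.
move=> bp G0 cG sG rho0 flat ep el T0 vr wr.
set C := 4 * beta * Num.max (r - rho) 0 ^+ 2.
pose Dn (x : 'rV[R]_d) := dotv (x - wstar) (x - wstar).
pose w' t := w t - eta *: grad G (w t + v t).
have St : forall t, (1 <= t <= T)%N -> G (w t + v t) <= (Dn (w t) - Dn (w' t)) / eta + C.
  by move=> t /vr tv; apply: step.
have Ind : forall k, (1 <= k <= T)%N ->
    \sum_(1 <= t < k.+1) G (w t + v t) <= (Dn (w 1%N) - Dn (w' k)) / eta + k%:R * C.
  elim=> [|k IH] //; case/andP => _ kT.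
  case: k IH kT => [|k] IH kT.
    by rewrite big_nat1 mul1r; apply: St.
  rewrite big_nat_recr //=.
  have IH' := IH (ltnW kT).
  have Sk := St k.+2 kT.
  have e : w' k.+1 = w k.+2 by rewrite (wr k.+1 kT).
  move: IH' Sk; rewrite e mulrSr => IH' Sk.
  have -> : k.+2%:R = k%:R + 1 + 1 :> R by rewrite !natr1.
  move: IH' Sk.
  move: (\sum_(1 <= i < k.+2) G (w i + v i)) (G (w k.+2 + v k.+2)) (Dn (w 1%N))
     (Dn (w k.+2)) (Dn (w' k.+2)) => S Gk a b c IH' Sk.
  rewrite !mulrBl !mulrDl in IH' Sk *; lra.
have := Ind T; rewrite T0 leqnn /= => /(_ isT) HT.
have Gw : G wstar = 0.
  apply: flat; rewrite subrr /enorm /dotv big1 ?sqrtr0 // => i _.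
  by rewrite mxE mul0r.
have TP : 0 < T%:R :> R by rewrite ltr0n.
rewrite Gw subr0 enorm_sq.
move: HT; rewrite /Dn -/(Dn (w 1%N)).
move: (\sum_(1 <= t < T.+1) G (w t + v t)) (Dn (w 1%N)) => S a HT.
have c0 := dotvv_ge0 (w' T - wstar).
move: (dotv (w' T - wstar) (w' T - wstar)) c0 HT => c c0 HT.
rewrite -(ler_pM2l TP) mulrA mulfV ?gt_eqF // mul1r mulrDr.
have -> : T%:R * (a / (eta * T%:R)) = a / eta by field; rewrite !gt_eqF.
have : 0 <= c / eta by rewrite divr_ge0 // ltW.
rewrite mulrBl in HT; lra.
Qed.


Section FSprops.
Variables (R : realType) (d : nat) (Z : Type) (f : 'rV[R]_d -> Z -> R) (n : nat) (z : 'I_n -> Z).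

Lemma FSE : FS f z = (n%:R^-1) *: (\sum_(i < n) (f ^~ (z i))).
Proof. by apply/funext => x; rewrite /FS /= fct_sumE. Qed.

Lemma enorm0 : enorm (0 : 'rV[R]_d) = 0.
Proof. by rewrite /enorm /dotv big1 ?sqrtr0 // => i _; rewrite mxE mul0r. Qed.

Lemma enorm_sum (a : 'I_n -> 'rV[R]_d) : enorm (\sum_i a i) <= \sum_i enorm (a i).
Proof.
elim/big_rec2: _ => [|i y1 y2 _ IH]; first by rewrite enorm0.
by apply: (le_trans (enormD _ _)); rewrite lerD2l.
Qed.

Variable beta : R.
Hypothesis hf : forall zz : Z, (forall x, 0 <= f x zz) /\ convex_fun (f ^~ zz) /\
                  smooth_fun beta (f ^~ zz).

Lemma FS_ge0 x : 0 <= FS f z x.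
Proof.
rewrite /FS mulr_ge0 // ?invr_ge0 ?ler0n //.
by apply: sumr_ge0 => i _; case: (hf (z i)).
Qed.

Lemma FS_convex : convex_fun (FS f z).
Proof.
move=> x y t t0 t1; rewrite /FS.
have -> : t * (n%:R^-1 * \sum_(i < n) f x (z i)) + (1 - t) * (n%:R^-1 * \sum_(i < n) f y (z i))
   = n%:R^-1 * \sum_(i < n) (t * f x (z i) + (1 - t) * f y (z i)).
  by rewrite big_split /= -!mulr_sumr; ring.
apply: ler_wpM2l; first by rewrite invr_ge0 ler0n.
by apply: ler_sum => i _; case: (hf (z i)) => _ [cv _]; apply: cv.
Qed.

Lemma FS_diff x : differentiable (FS f z) x.
Proof.
rewrite FSE; apply: differentiableZ; apply: differentiable_sum => i.
by case: (hf (z i)) => _ [_ [df _]].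
Qed.

Lemma FS_grad x : grad (FS f z) x = n%:R^-1 *: \sum_(i < n) grad (f ^~ (z i)) x.
Proof.
apply/rowP => j; rewrite !mxE summxE.
rewrite -deriveE; last exact: FS_diff.
rewrite FSE deriveZ; last first.
  apply: derivable_sum => i; apply: diff_derivable.
  by case: (hf (z i)) => _ [_ [df _]].
rewrite derive_sum; last first.
  move=> i; apply: diff_derivable.
  by case: (hf (z i)) => _ [_ [df _]].
congr (_ * _); apply: eq_bigr => i _; rewrite mxE deriveE //.
by case: (hf (z i)) => _ [_ [df _]].
Qed.

Lemma FS_smooth : 0 <= beta -> smooth_fun beta (FS f z).
Proof.
move=> b0; split; first exact: FS_diff.
move=> x y; rewrite !FS_grad -scalerBr -sumrB enormZ ger0_norm ?invr_ge0 ?ler0n //.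
apply: (le_trans (ler_wpM2l _ (enorm_sum _))); first by rewrite invr_ge0 ler0n.
apply: (@le_trans _ _ (n%:R^-1 * \sum_(i < n) (beta * enorm (x - y)))).
  apply: ler_wpM2l; first by rewrite invr_ge0 ler0n.
  by apply: ler_sum => i _; case: (hf (z i)) => _ [_ [_ L]]; apply: L.
rewrite sumr_const card_ord.
have [->|np] := eqVneq n 0%N; first by rewrite invr0 mul0r mulr_ge0 // enorm_ge0.
by rewrite -(mulr_natl (beta * enorm (x - y))) [n%:R^-1 * _]mulrA mulVf ?pnatr_eq0 // mul1r.
Qed.

Lemma FS_flat rho wstar : (forall i : 'I_n, flat_min rho (f ^~ (z i)) wstar) ->
  forall p, enorm (p - wstar) <= rho -> FS f z p = 0.
Proof.
move=> fl p hp; rewrite /FS big1 ?mulr0 // => i _; exact: fl.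
Qed.
End FSprops.

Theorem mainTheorem2 (R : realType) (d : nat) (Z : Type)
  (f : 'rV[R]_d -> Z -> R) (beta : R) (n : nat) (z : 'I_n -> Z)
  (rho r eta : R) (wstar : 'rV[R]_d) (T : nat)
  (w v : nat -> 'rV[R]_d) :
  0 < beta ->
  (forall zz : Z, (forall x, 0 <= f x zz) /\ convex_fun (f ^~ zz) /\
                  smooth_fun beta (f ^~ zz)) ->
  0 <= rho ->
  (forall i : 'I_n, flat_min rho (f ^~ (z i)) wstar) ->
  0 < eta -> eta <= (4 * beta)^-1 ->
  0 < r ->
  (0 < T)%N ->
  (forall t, (1 <= t <= T)%N -> enorm (v t) <= r) ->
  (forall t, (1 <= t < T)%N ->
     w t.+1 = w t - eta *: grad (FS f z) (w t + v t)) ->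
  (T%:R)^-1 * (\sum_(1 <= t < T.+1) FS f z (w t + v t)) - FS f z wstar
    <= enorm (w 1%N - wstar) ^+ 2 / (eta * T%:R)
       + 4 * beta * (Num.max (r - rho) 0) ^+ 2.
Proof.
move=> bp hf rho0 flat ep el r0 T0 vr wr.
apply: main_abstract => //.
- by move=> x; apply: FS_ge0.
- by apply: FS_convex.
- by apply: FS_smooth => //; apply: ltW.
- by apply: FS_flat.
Qed.
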